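(* (i) Let $X$ be a real normed linear space and $\varepsilon\in[0,2)$. Then $X$ is $\varepsilon$-smooth if and only if each two-dimensional subspace of $X$ is $\varepsilon$-smooth. (ii) Let $X$ be a real normed linear space. If $X$ is approximately smooth, then each two-dimensional subspace of $X$ is approximately smooth. Moreover, if $X$ is finite-dimensional and each of its two-dimensional subspaces is approximately smooth, then $X$ is approximately smooth.
   Context: For a normed space $Z$ and $z\in Z\setminus\{\theta\}$, $J(z)=\{f\in S_{Z^*}: f(z)=\|z\|\}$; $z$ is $\varepsilon$-smooth if $\operatorname{diam}J(z)=\sup_{f,g\in J(z)}\|f-g\|\le\varepsilon$. The space $Z$ is $\varepsilon$-smooth ($\varepsilon\in[0,2)$) if every $z\in S_Z$ is $\varepsilon$-smooth, and $Z$ is approximately smooth if it is $\varepsilon$-smooth for some $\varepsilon\in[0,2)$. Subspaces carry the restricted norm. *)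

(* Defs.v *)
From HB Require Import structures.
From mathcomp Require Import all_boot all_order all_algebra.
From mathcomp Require Import all_classical all_reals all_analysis.
Set Implicit Arguments. Unset Strict Implicit. Unset Printing Implicit Defensive.
Import Order.TTheory GRing.Theory Num.Theory.
Import numFieldNormedType.Exports.
Local Open Scope classical_set_scope.
Local Open Scope ring_scope.

Section Smooth.
Variables (R : realType) (V : normedModType R).

Definition is_subspace (Y : set V) : Prop :=
  Y 0 /\ forall (a : R) (x y : V), Y x -> Y y -> Y (a *: x + y).

Definition two_dim_subspace (Y : set V) : Prop :=
  exists u v : V,
    (forall a b : R, a *: u + b *: v = 0 -> a = 0 /\ b = 0) /\
    Y = [set a *: u + b *: v | a in [set: R] & b in [set: R]].

Definition finite_dimensional : Prop :=
  exists (n : nat) (e : 'I_n -> V),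
    forall x : V, exists c : 'I_n -> R, x = \sum_(i < n) c i *: e i.

(* A functional on the subspace Y is represented by f : V -> R, only its
   values on Y matter. It is linear on Y: *)
Definition linear_on (Y : set V) (f : V -> R) : Prop :=
  forall (a : R) (x y : V), Y x -> Y y -> f (a *: x + y) = a * f x + f y.

Definition opnorm_on (Y : set V) (f : V -> R) : \bar R :=
  ereal_sup [set (`|f y|)%:E | y in [set y | Y y /\ `|y| <= 1]].

Definition in_J (Y : set V) (z : V) (f : V -> R) : Prop :=
  linear_on Y f /\ opnorm_on Y f = 1%E /\ f z = `|z|.

Definition eps_smooth_pt (Y : set V) (eps : R) (z : V) : Prop :=
  forall f g : V -> R, in_J Y z f -> in_J Y z g ->
    (opnorm_on Y (fun y => (f y - g y)%R) <= eps%:E)%E.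

Definition eps_smooth (Y : set V) (eps : R) : Prop :=
  forall z : V, Y z -> `|z| = 1 -> eps_smooth_pt Y eps z.

Definition approx_smooth (Y : set V) : Prop :=
  exists eps : R, 0 <= eps < 2 /\ eps_smooth Y eps.

End Smooth.

(* Main.v *)
Require Import Defs.
Set Warnings "-notation-overridden -ambiguous-paths -notation-incompatible-prefix".
From HB Require Import structures.
From mathcomp Require Import all_boot all_order all_algebra.
From mathcomp Require Import all_classical all_reals all_analysis.
From mathcomp Require Import ring lra.
Import Order.TTheory GRing.Theory Num.Theory.
Import numFieldNormedType.Exports.
Local Open Scope classical_set_scope.
Local Open Scope ring_scope.
Set Implicit Arguments. Unset Strict Implicit. Unset Printing Implicit Defensive.
Section Basics.
Variables (R : realType) (X : normedModType R).

Lemma eqle (a b : R) : a = b -> a <= b. Proof. by move->. Qed.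

Definition span2 (u v : X) : set X :=
  [set a *: u + b *: v | a in [set: R] & b in [set: R]].

Definition closedY (Y : set X) := Y 0 /\ forall (a : R) x y, Y x -> Y y -> Y (a *: x + y).

Lemma span2_closed u v : closedY (span2 u v).
Proof.
split; first by exists 0 => //; exists 0 => //; rewrite !scale0r addr0.
move=> a _ _ [a1 _ [b1 _ <-]] [a2 _ [b2 _ <-]].
exists (a * a1 + a2) => //; exists (a * b1 + b2) => //.
by rewrite scalerDr !scalerA !scalerDl; rewrite addrACA.
Qed.

Lemma two_dim_closed Y : two_dim_subspace Y -> closedY Y.
Proof. by move=> [u [v [_ ->]]]; exact: span2_closed. Qed.

Lemma closedT : closedY [set: X].
Proof. by []. Qed.

Lemma lin0 Y (f : X -> R) : closedY Y -> linear_on Y f -> f 0 = 0.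
Proof.
move=> [Y0 _] lf; have := lf 1 0 0 Y0 Y0.
rewrite scale1r addr0 mul1r => h.
by have := congr1 (fun t => t - f 0) h; rewrite /= subrr addrK.
Qed.

Lemma linZ Y (f : X -> R) a x : closedY Y -> linear_on Y f -> Y x ->
  f (a *: x) = a * f x.
Proof.
move=> cY lf Yx; have := lf a x 0 Yx cY.1.
by rewrite addr0 (lin0 cY lf) addr0.
Qed.

Lemma opnorm_ub Y (h : X -> R) y : Y y -> `|y| <= 1 ->
  ((`|h y|)%:E <= opnorm_on Y h)%E.
Proof. by move=> Yy y1; apply: ereal_sup_ubound; exists y. Qed.

Lemma opnorm_bound Y (f : X -> R) : closedY Y -> linear_on Y f ->
  (opnorm_on Y f <= 1)%E -> forall y, Y y -> `|f y| <= `|y|.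
Proof.
move=> cY lf on1 y Yy.
have [->|y0] := eqVneq y 0; first by rewrite (lin0 cY lf) !normr0.
have ny : 0 < `|y| by rewrite normr_gt0.
have Yay : Y (`|y|^-1 *: y).
  by rewrite -[_ *: y]addr0; exact: cY.2 _ _ _ Yy cY.1.
have nay : `| `|y|^-1 *: y| = 1.
  by rewrite normrZ normfV normr_id mulVf // gt_eqF.
have := le_trans (@opnorm_ub _ f _ Yay (eqle nay)) on1.
rewrite lee_fin (linZ _ cY lf Yy) normrM normfV normr_id.
by rewrite ler_pdivrMl // mulr1.
Qed.

Lemma restrict_inJ Y (F : X -> R) z :
  linear_on [set: X] F -> (forall x, `|F x| <= `|x|) -> closedY Y ->
  Y z -> `|z| = 1 -> F z = 1 -> in_J Y z F.
Proof.
move=> lF bF cY Yz z1 Fz; split; last split; last by rewrite Fz z1.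
- by move=> a x y _ _; exact: lF.
apply/eqP; rewrite eq_le; apply/andP; split.
  apply: ge_ereal_sup => _ [y [Yy y1] <-]; rewrite lee_fin.
  exact: le_trans (bF y) y1.
by have := @opnorm_ub _ F _ Yz (eqle z1); rewrite Fz normr1.
Qed.

End Basics.
Section Key.
Variables (R : realType) (X : normedModType R).

Lemma lin2 (F : X -> R) a b x y : linear_on [set: X] F ->
  F (a *: x + b *: y) = a * F x + b * F y.
Proof.
move=> lF; rewrite lF // (linZ _ (@closedT _ X) lF) //.
Qed.

Lemma key (F G : X -> R) (z w : X) (eps : R) :
  linear_on [set: X] F -> linear_on [set: X] G ->
  (forall x, `|F x| <= `|x|) -> (forall x, `|G x| <= `|x|) ->
  `|z| = 1 -> F z = 1 -> G z = 1 -> `|w| <= 1 -> 0 <= eps ->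
  eps < `|F w - G w| ->
  two_dim_subspace (span2 z w) /\ ~ eps_smooth (span2 z w) eps.
Proof.
move=> lF lG bF bG z1 Fz Gz w1 e0 ew; split.
  exists z, w; split => // a b h.
  have hF := lin2 a b z w lF; have hG := lin2 a b z w lG.
  rewrite h (lin0 (@closedT _ X) lF) in hF.
  rewrite h (lin0 (@closedT _ X) lG) in hG.
  have hb : b * (F w - G w) = 0.
    rewrite Fz mulr1 in hF; rewrite Gz mulr1 in hG.
    rewrite mulrBr.
    have -> : b * F w = - a by apply/eqP; rewrite -addr_eq0 addrC -hF.
    have -> : b * G w = - a by apply/eqP; rewrite -addr_eq0 addrC -hG.
    by rewrite subrr.
  have Hw : F w - G w != 0.
    by rewrite -normr_gt0; exact: le_lt_trans e0 ew.
  move/eqP: hb; rewrite mulf_eq0 (negbTE Hw) orbF => /eqP b0.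
  split => //; move: h; rewrite b0 scale0r addr0 => /eqP.
  rewrite scaler_eq0 => /orP[/eqP //|/eqP z0].
  by move: z1; rewrite z0 normr0 => /eqP; rewrite eq_sym oner_eq0.
move=> hs.
have Yz : span2 z w z by exists 1 => //; exists 0 => //; rewrite scale1r scale0r addr0.
have Yw : span2 z w w by exists 0 => //; exists 1 => //; rewrite scale1r scale0r add0r.
have := hs z Yz z1 F G (restrict_inJ lF bF (span2_closed z w) Yz z1 Fz)
  (restrict_inJ lG bG (span2_closed z w) Yz z1 Gz).
move=> /(le_trans (@opnorm_ub _ _ _ (fun y => F y - G y) _ Yw w1)).
by rewrite lee_fin leNgt ew.
Qed.

End Key.
Section PartA.
Variables (R : realType) (X : normedModType R).

Lemma inJT_bound (F : X -> R) z : in_J [set: X] z F -> forall x, `|F x| <= `|x|.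
Proof.
move=> [lF [nF _]] x; apply: (opnorm_bound (@closedT _ X) lF) => //.
by rewrite nF.
Qed.

Lemma partA (eps : R) : 0 <= eps ->
  (forall Y : set X, two_dim_subspace Y -> eps_smooth Y eps) ->
  eps_smooth [set: X] eps.
Proof.
move=> e0 hY z _ z1 F G JF JG.
have bF := inJT_bound JF; have bG := inJT_bound JG.
case: JF => lF [_ Fz]; case: JG => lG [_ Gz].
rewrite z1 in Fz Gz.
rewrite leNgt; apply/negP => /ereal_sup_gt [_ [y [_ y1] <-]].
rewrite lte_fin => lt.
have [td ns] := key lF lG bF bG z1 Fz Gz y1 e0 lt.
exact: ns (hY _ td).
Qed.

End PartA.
Section HahnBanach.
Variables (R : realType) (X : normedModType R).

Definition good (A : set (X * R)) :=
  [/\ (forall x r s, A (x, r) -> A (x, s) -> r = s),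
      (forall (a : R) x y r s, A (x, r) -> A (y, s) -> A (a *: x + y, a * r + s)) &
      (forall x r, A (x, r) -> r <= `|x|)].

Lemma ext_step (H : set (X * R)) (x0 : X) : good H -> H (0, 0) ->
  (forall r, ~ H (x0, r)) ->
  exists B : set (X * R), [/\ good B, H `<=` B & exists c, B (x0, c)].
Proof.
move=> [fH cH bH] H00 nx0.
have key d1 h1 d2 h2 : H (d1, h1) -> H (d2, h2) ->
    h1 - `|d1 - x0| <= `|d2 + x0| - h2.
  move=> H1 H2; have := bH _ _ (cH 1 d1 d2 h1 h2 H1 H2).
  rewrite scale1r mul1r => hb.
  have : `|d1 + d2| <= `|d1 - x0| + `|d2 + x0|.
    by rewrite -[d1 + d2](_ : (d1 - x0) + (d2 + x0) = _) ?ler_normD // addrACA addNr addr0.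
  move=> ht; lra.
pose E := [set u | exists d h, H (d, h) /\ u = h - `|d - x0|].
have E0 : E !=set0 by exists (0 - `|0 - x0|); exists 0, 0.
have Eub : ubound E (`|0 + x0| - 0).
  by move=> _ [d [h [Hdh ->]]]; exact: key.
pose c := sup E.
have c_ge d h : H (d, h) -> h - `|d - x0| <= c.
  move=> Hdh; apply: sup_upper_bound; first by split => //; exists (`|0 + x0| - 0).
  by exists d, h.
have c_le d h : H (d, h) -> c <= `|d + x0| - h.
  move=> Hdh; apply: ge_sup => // _ [d1 [h1 [H1 ->]]]; exact: key.
pose B := [set p : X * R | exists d h (t : R), [/\ H (d, h), p.1 = d + t *: x0 & p.2 = h + t * c]].
exists B; split; last by exists c; exists 0, 0, 1; rewrite /= scale1r add0r mul1r add0r.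
- split.
  + move=> x r s [d [h [t [Hdh /= ex er]]]] [d' [h' [t' [Hdh' /= ex' es]]]].
    have [tt|tt] := eqVneq t t'.
      rewrite tt in ex er; rewrite ex' in ex; move/addIr: ex => dd.
      rewrite er es; rewrite -dd in Hdh; by rewrite (fH _ _ _ Hdh Hdh').
    exfalso.
    have H1 := cH (-1) d d' h h' Hdh Hdh'.
    rewrite scaleN1r mulN1r in H1.
    have H2 := cH (t - t')^-1 _ 0 _ 0 H1 H00.
    rewrite addr0 in H2.
    have e1 : - d + d' = (t - t') *: x0.
      have -> : d' = d + t *: x0 - t' *: x0 by rewrite -ex ex' addrK.
      by rewrite addrA addKr scalerBl.
    rewrite e1 scalerA mulVf ?scale1r in H2; last by rewrite subr_eq0.
    exact: nx0 H2.
  + move=> a x y r s [d [h [t [Hdh /= ex er]]]] [d' [h' [t' [Hdh' /= ey es]]]].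
    exists (a *: d + d'), (a * h + h'), (a * t + t'); split => /=.
    * exact: cH.
    * by rewrite ex ey scalerDr scalerA addrACA scalerDl.
    * rewrite er es; ring.
  + move=> x r [d [h [t [Hdh /= -> ->]]]].
    have [t0|t0|->] := ltgtP t 0; last by rewrite scale0r mul0r !addr0; exact: bH.
    * pose s := - t.
      have s0 : 0 < s by rewrite oppr_gt0.
      have H1 := cH s^-1 d 0 h 0 Hdh H00; rewrite !addr0 in H1.
      have := c_ge _ _ H1.
      have e : s * `|s^-1 *: d - x0| = `|d + t *: x0|.
        rewrite -[s in s * _](gtr0_norm s0) -normrZ scalerBr scalerA mulfV ?gt_eqF //.
        by rewrite scale1r /s scaleNr opprK.
      move=> hc; have := ler_wpM2l (ltW s0) hc.
      rewrite mulrBr e mulrA mulfV ?gt_eqF // mul1r /s => hh; lra.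
    * have H1 := cH t^-1 d 0 h 0 Hdh H00; rewrite !addr0 in H1.
      have := c_le _ _ H1.
      have e : t * `|t^-1 *: d + x0| = `|d + t *: x0|.
        rewrite -[t in t * _](gtr0_norm t0) -normrZ scalerDr scalerA mulfV ?gt_eqF //.
        by rewrite scale1r.
      move=> hc; have := ler_wpM2l (ltW t0) hc.
      rewrite mulrBr e mulrA mulfV ?gt_eqF // mul1r => hh; lra.
- move=> [d h] Hdh; exists d, h, 0; split => //=.
  + by rewrite scale0r addr0.
  + by rewrite mul0r addr0.
Qed.

End HahnBanach.
Section HahnBanach2.
Variables (R : realType) (X : normedModType R).

Lemma hahn_banach (Y : set X) (f : X -> R) : closedY Y -> linear_on Y f ->
  (forall y, Y y -> f y <= `|y|) ->
  exists F : X -> R, [/\ linear_on [set: X] F, (forall x, `|F x| <= `|x|)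
     & (forall y, Y y -> F y = f y)].
Proof.
move=> cY lf bf.
pose Gf := [set p : X * R | Y p.1 /\ p.2 = f p.1].
have gGf : good Gf.
  split.
  - by move=> x r s [_ /= ->] [_ /= ->].
  - move=> a x y r s [/= Yx ->] [/= Yy ->]; split => /=; [exact: cY.2 | by rewrite lf].
  - by move=> x r [/= Yx ->]; exact: bf.
pose P := fun A : set (X * R) => good (A `|` Gf).
have [A [PA Amax]] : exists A, P A /\ forall B, A `<` B -> ~ P B.
  apply: Zorn_bigcup => F FP Ftot.
  pose U := \bigcup_(A in F) A.
  have sub A : F A -> A `|` Gf `<=` U `|` Gf.
    by move=> FA u [Au|Gu]; [left; exists A | right].
  have common p q : (U `|` Gf) p -> (U `|` Gf) q ->
      exists S, [/\ good S, S p, S q & S `<=` U `|` Gf].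
    move=> [[A1 FA1 A1p]|Gp] [[A2 FA2 A2q]|Gq].
    - case: (Ftot _ _ FA1 FA2) => s12.
      + exists (A2 `|` Gf); split; [exact: FP | left; exact: s12 | by left | exact: sub].
      + exists (A1 `|` Gf); split; [exact: FP | by left | left; exact: s12 | exact: sub].
    - exists (A1 `|` Gf); split; [exact: FP | by left | by right | exact: sub].
    - exists (A2 `|` Gf); split; [exact: FP | by right | by left | exact: sub].
    - by exists Gf; split => // u Gu; right.
  split.
  - move=> x r s hr hs; have [S [[fS _ _] Sr Ss _]] := common _ _ hr hs.
    exact: fS Sr Ss.
  - move=> a x y r s hr hs; have [S [[_ cS _] Sr Ss SU]] := common _ _ hr hs.
    by apply: SU; exact: cS.
  - move=> x r hr; have [S [[_ _ bS] Sr _ _]] := common _ _ hr hr.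
    exact: bS.
pose H := A `|` Gf.
have gH : good H by [].
have H00 : H (0, 0) by right; split => //=; [exact: cY.1 | rewrite (lin0 cY lf)].
have tot x : exists r, H (x, r).
  have [//|nex] := pselect (exists r, H (x, r)).
  have nx0 : forall r, ~ H (x, r) by move=> r Hr; apply: nex; exists r.
  have [B [gB HB [c Bc]]] := ext_step gH H00 nx0.
  exfalso; apply: (Amax B).
    split; first by move=> u Au; apply: HB; left.
    by move=> BA; apply: (nx0 c); left; exact: BA.
  by rewrite /P setUidl // => u Gu; apply: HB; right.
have [F HF] := choice tot.
case: gH => fH cH bH.
have Flin : linear_on [set: X] F.
  move=> a x y _ _; apply: fH (HF _) _; exact: cH.
exists F; split => //.
- move=> x; rewrite ler_norml; apply/andP; split; last exact: bH.
  have := cH (-1) x 0 _ _ (HF x) H00.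
  rewrite addr0 scaleN1r mulN1r addr0; move=> Hm.
  have e := fH _ _ _ (HF (- x)) Hm.
  have := bH _ _ (HF (- x)); rewrite e normrN.
  by rewrite lerNl.
- move=> y Yy; apply: fH (HF y) _; right; split => //.
Qed.

End HahnBanach2.
Section PartB.
Variables (R : realType) (X : normedModType R).

Lemma partB (eps : R) : eps_smooth [set: X] eps ->
  forall Y : set X, two_dim_subspace Y -> eps_smooth Y eps.
Proof.
move=> hX Y tdY z Yz z1 f g [lf [nf fz]] [lg [ng gz]].
have cY := two_dim_closed tdY.
have bf : forall y, Y y -> `|f y| <= `|y|.
  by apply: (opnorm_bound cY lf); rewrite nf.
have bg : forall y, Y y -> `|g y| <= `|y|.
  by apply: (opnorm_bound cY lg); rewrite ng.
have [F [lF bF FY]] := hahn_banach cY lf (fun y Yy => le_trans (ler_norm _) (bf y Yy)).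
have [G [lG bG GY]] := hahn_banach cY lg (fun y Yy => le_trans (ler_norm _) (bg y Yy)).
have JF : in_J [set: X] z F.
  by apply: restrict_inJ => //; rewrite FY // fz z1.
have JG : in_J [set: X] z G.
  by apply: restrict_inJ => //; rewrite GY // gz z1.
have := hX z I z1 F G JF JG.
apply: le_trans; apply: ge_ereal_sup => _ [y [Yy y1] <-].
rewrite -(FY y Yy) -(GY y Yy); apply: ereal_sup_ubound; by exists y.
Qed.

End PartB.
Section Seqs.
Variable (R : realType).

Lemma incr_geq (phi : nat -> nat) : increasing_seq phi -> forall n, (n <= phi n)%N.
Proof.
move=> hp; elim => [//|n IH].
have h : (phi n.+1 <= phi n)%O = false.
  by rewrite hp ltnn.
change (leq (phi n.+1) (phi n) = false) in h.
move/negbT: h; rewrite -ltnNge.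
by apply: leq_ltn_trans.
Qed.

Lemma cvg_sub (T : topologicalType) (u : nat -> T) (l : T) (phi : nat -> nat) :
  increasing_seq phi -> u @ \oo --> l -> (u \o phi) @ \oo --> l.
Proof.
move=> hp ul; apply: cvg_comp ul.
move=> A [N _ NA]; exists N => // n /= Nn; apply: NA.
exact: leq_trans Nn (incr_geq hp n).
Qed.

Lemma incr_comp (p q : nat -> nat) : increasing_seq p -> increasing_seq q ->
  increasing_seq (p \o q).
Proof. by move=> hp hq n m /=; rewrite hp; exact: hq. Qed.

Lemma bounded_of (u : nat -> R) (M : R) : (forall m, `|u m| <= M) ->
  bounded_fun u.
Proof.
move=> hb; exists M; split; first exact: num_real.
by move=> M' hM x _; exact: le_trans (hb x) (ltW hM).
Qed.

Lemma bw_ord k (u : 'I_k -> nat -> R) (M : R) : (forall i m, `|u i m| <= M) ->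
  exists phi, increasing_seq phi /\ forall i, cvgn (u i \o phi).
Proof.
elim: k u => [|k IH] u hb.
  by exists id; split => // -[].
have [p1 [hp1 c1]] := IH (fun j => u (lift ord0 j)) (fun j => hb _).
have [p2 hp2 c2] := @bolzano_weierstrass R (u ord0 \o p1) (bounded_of (fun m => hb _ _)).
exists (p1 \o p2); split; first exact: incr_comp.
move=> i; case: (unliftP ord0 i) => [j ->|->] //.
apply/cvg_ex; exists (limn (u (lift ord0 j) \o p1)).
exact: (cvg_sub hp2 (c1 j)).
Qed.

Lemma bw_fin (I : finType) (u : I -> nat -> R) (M : R) : (forall i m, `|u i m| <= M) ->
  exists phi, increasing_seq phi /\ forall i, cvgn (u i \o phi).
Proof.
move=> hb.
have [phi [hp c]] := @bw_ord #|I| (fun j : 'I_#|I| => u (enum_val j)) M (fun j => hb _).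
by exists phi; split => // i; have := c (enum_rank i); rewrite enum_rankK.
Qed.

Lemma cvg_sumV (V : normedModType R) n (f : 'I_n -> nat -> V) (l : 'I_n -> V) :
  (forall i, f i @ \oo --> l i) ->
  (fun m => \sum_(i < n) f i m) @ \oo --> \sum_(i < n) l i.
Proof.
move=> h; apply: cvg_big => //; first exact: add_continuous.
Qed.

End Seqs.
Section Basis.
Variables (R : realType) (X : normedModType R).

Definition spanning n (e : 'I_n -> X) :=
  forall x, exists c : 'I_n -> R, x = \sum_(i < n) c i *: e i.
Definition indep n (e : 'I_n -> X) :=
  forall c : 'I_n -> R, \sum_(i < n) c i *: e i = 0 -> forall i, c i = 0.

Lemma basis_exists : finite_dimensional X ->
  exists n (e : 'I_n -> X), spanning e /\ indep e.
Proof.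
move=> [n [e he]]; elim: n e he => [|n IH] e he.
  by exists 0, e; split => // c _ [].
have [ind|nind] := pselect (indep e); first by exists n.+1, e.
move/existsNP: nind => [c /not_implyP [hc /existsNP [j /eqP cj]]].
pose e' := fun i : 'I_n => e (lift j i).
apply: (IH e') => x.
have [d ->] := he x.
pose Sc := \sum_(i < n) c (lift j i) *: e' i.
pose Sd := \sum_(i < n) d (lift j i) *: e' i.
have hej : e j = - (c j)^-1 *: Sc.
  move: hc; rewrite (bigD1_ord j) //= => /eqP; rewrite addr_eq0 => /eqP h.
  by rewrite scaleNr -scalerN -h scalerA mulVf // scale1r.
exists (fun i => d (lift j i) - d j * (c j)^-1 * c (lift j i)).
have -> : \sum_(i < n) (d (lift j i) - d j * (c j)^-1 * c (lift j i)) *: e' i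
    = Sd - (d j * (c j)^-1) *: Sc.
  rewrite scaler_sumr -sumrB; apply: eq_bigr => i _; by rewrite scalerBl scalerA.
rewrite (bigD1_ord j) //= hej -/Sd.
by rewrite scalerA mulrN scaleNr addrC.
Qed.

End Basis.
Section NormEq.
Variables (R : realType) (X : normedModType R).

Lemma harm_bound (a : nat -> R) (phi : nat -> nat) : increasing_seq phi ->
  (forall m, a m < (m.+1%:R)^-1) -> forall m, a (phi m) <= harmonic m.
Proof.
move=> hp h m; apply: le_trans (ltW (h (phi m))) _ => /=.
by rewrite lef_pV2 ?posrE ?ltr0n // ler_nat ltnS incr_geq.
Qed.

Lemma lim_le_harm (u : nat -> R) (l : R) : u @ \oo --> l ->
  (forall m, u m <= harmonic m) -> l <= 0.
Proof.
move=> ul hb; apply: (ler_cvg_to ul (@cvg_harmonic R)).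
exact: nearW.
Qed.

Lemma normeq n (e : 'I_n -> X) : indep e ->
  exists K, 0 < K /\ forall c, \sum_(i < n) `|c i| <= K * `|\sum_(i < n) c i *: e i|.
Proof.
move=> ind.
have [//|nK] := pselect (exists K, 0 < K /\
  forall c, \sum_(i < n) `|c i| <= K * `|\sum_(i < n) c i *: e i|).
exfalso.
pose T := fun c : 'I_n -> R => \sum_(i < n) c i *: e i.
have h (m : nat) : exists c : 'I_n -> R, m.+1%:R * `|T c| < \sum_(i < n) `|c i|.
  apply: contrapT => hn; apply: nK; exists m.+1%:R; split => // c.
  by rewrite leNgt; apply/negP => hlt; apply: hn; exists c.
have [cs hcs] := choice h.
pose s m := \sum_(i < n) `|cs m i|.
have s0 m : 0 < s m by apply: le_lt_trans (hcs m); rewrite mulr_ge0.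
pose ds m i := cs m i / s m.
have sumd m : \sum_(i < n) `|ds m i| = 1.
  rewrite /ds; under eq_bigr do rewrite normrM normfV (gtr0_norm (s0 m)).
  rewrite -mulr_suml -/(s m) mulfV //; exact: lt0r_neq0 (s0 m).
have Td m : T (ds m) = (s m)^-1 *: T (cs m).
  rewrite /T scaler_sumr; apply: eq_bigr => i _; by rewrite scalerA mulrC.
have Tdb m : `|T (ds m)| < (m.+1%:R)^-1.
  rewrite Td normrZ normfV (gtr0_norm (s0 m)) ltr_pdivrMl // mulrC.
  by rewrite ltr_pdivlMl ?ltr0n //; exact: hcs m.
have dsb i m : `|ds m i| <= 1.
  rewrite -(sumd m) (bigD1_ord i) //= lerDl; exact: sumr_ge0.
have [phi [hp cv]] := bw_fin (u := fun i m => ds m i) (M := 1) dsb.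
pose l i := limn ((fun m => ds m i) \o phi).
have cl i : (fun m => ds (phi m) i) @ \oo --> l i := cv i.
have hs : (fun m => \sum_(i < n) `|ds (phi m) i|) @ \oo --> \sum_(i < n) `|l i|.
  by apply: cvg_sumV => i; apply: cvg_norm; exact: cl.
have sl : \sum_(i < n) `|l i| = 1.
  apply/eqP; rewrite eq_le; apply/andP; split.
  - by apply: (ler_cvg_to hs (@cvg_cst R^o (1 : R) nat \oo _)); apply: nearW => m; rewrite sumd.
  - by apply: (ler_cvg_to (@cvg_cst R^o (1 : R) nat \oo _) hs); apply: nearW => m; rewrite sumd.
have hT : (fun m => `|T (ds (phi m))|) @ \oo --> `|T l|.
  apply: cvg_norm; apply: cvg_sumV => i; apply: cvgZr_tmp; exact: cl.
have Tl0 : `|T l| <= 0.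
  apply: (lim_le_harm hT); exact: (harm_bound (a := fun m => `|T (ds m)|) hp Tdb).
have T0 : T l = 0 by apply/eqP; rewrite -normr_le0.
have l0 := ind l T0.
move: sl; rewrite big1 => [/eqP|i _]; first by rewrite eq_sym oner_eq0.
by rewrite l0 normr0.
Qed.

End NormEq.
Section LimHelpers.
Variables (R : realType) (X : normedModType R).

Lemma cvg_uniqR (u : nat -> R) (a b : R) : u @ \oo --> a -> u @ \oo --> b -> a = b.
Proof.
move=> ha hb; apply/eqP; rewrite eq_le; apply/andP; split.
- by apply: (ler_cvg_to ha hb); apply: nearW.
- by apply: (ler_cvg_to hb ha); apply: nearW.
Qed.

Lemma sq0 (u v : nat -> R) : v @ \oo --> (0 : R) -> (forall m, `|u m| <= v m) ->
  u @ \oo --> (0 : R).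
Proof.
move=> hv hb; apply: (@squeeze_cvgr _ _ _ _ (fun m => - v m) v).
- by apply: nearW => m; rewrite -ler_norml.
- by rewrite -oppr0; exact: cvgN.
- exact: hv.
Qed.

Lemma lin_sum (f : X -> R) n (c : 'I_n -> R) (e : 'I_n -> X) :
  linear_on [set: X] f -> f (\sum_(i < n) c i *: e i) = \sum_(i < n) c i * f (e i).
Proof.
move=> lf; elim/big_rec2: _ => [|i y1 y2 _ <-]; first exact: lin0 (@closedT _ X) lf.
exact: lf.
Qed.

Lemma linN (f : X -> R) x : linear_on [set: X] f -> f (- x) = - f x.
Proof.
by move=> lf; rewrite -scaleN1r (linZ _ (@closedT _ X) lf) // mulN1r.
Qed.

Lemma cvg_app (Fs : nat -> X -> R) (Fl : X -> R) (xs : nat -> X) (x : X) :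
  (forall m, linear_on [set: X] (Fs m)) -> (forall m y, `|Fs m y| <= `|y|) ->
  (fun m => Fs m x) @ \oo --> Fl x -> xs @ \oo --> x ->
  (fun m => Fs m (xs m)) @ \oo --> Fl x.
Proof.
move=> lF bF hx hxs.
have e m : Fs m (xs m) = Fs m x + Fs m (xs m - x).
  have := lF m 1 (xs m) (- x) I I.
  rewrite scale1r mul1r (linN _ (lF m)) => ->.
  by rewrite addrC subrK.
rewrite (eq_cvg _ _ e) -[Fl x]addr0; apply: cvgD => //.
apply: (@sq0 _ (fun m => `|xs m - x|)); last by move=> m; exact: bF.
rewrite -(@normr0 _ X) -(subrr x); apply: cvg_norm; apply: cvgB => //; exact: cvg_cst.
Qed.

Lemma lim_functional n (e : 'I_n -> X) (Fs : nat -> X -> R) (Fl : 'I_n -> R) :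
  spanning e -> (forall m, linear_on [set: X] (Fs m)) ->
  (forall m y, `|Fs m y| <= `|y|) ->
  (forall i, (fun m => Fs m (e i)) @ \oo --> Fl i) ->
  exists F : X -> R, [/\ linear_on [set: X] F, (forall y, `|F y| <= `|y|) &
     forall y, (fun m => Fs m y) @ \oo --> F y].
Proof.
move=> sp lF bF hF.
have [coord hc] := choice sp.
pose F x := \sum_(i < n) coord x i * Fl i.
have cF y : (fun m => Fs m y) @ \oo --> F y.
  have e1 m : Fs m y = \sum_(i < n) coord y i * Fs m (e i).
    by rewrite {1}(hc y) lin_sum.
  rewrite (eq_cvg _ _ e1); apply: cvg_sumV => i; exact: cvgMl_tmp.
exists F; split => //.
- move=> a x y _ _; apply: (cvg_uniqR (cF _)).
  have e2 m : Fs m (a *: x + y) = a * Fs m x + Fs m y by rewrite (lF m).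
  rewrite (eq_cvg _ _ e2); apply: cvgD => //; exact: cvgMl_tmp.
- move=> y; apply: (cvgr_to_le (cvg_norm (cF y))); apply: nearW => m; exact: bF.
Qed.

End LimHelpers.
Lemma partC (R : realType) (X : normedModType R) : finite_dimensional X ->
     (forall Y : set X, two_dim_subspace Y -> approx_smooth Y) ->
     approx_smooth [set: X].
Proof.
move=> fdX hY.
have [n [e [sp ind]]] := basis_exists fdX.
have [K [K0 hK]] := normeq ind.
have [//|nA] := pselect (approx_smooth [set: X]).
exfalso.
pose eps (m : nat) : R := 2 - (m.+1%:R)^-1.
pose P m (t : X * (X -> R) * (X -> R) * X) :=
  let: (z, F, G, w) := t in
  `|z| = 1 /\ linear_on [set: X] F /\ linear_on [set: X] G /\
      (forall x, `|F x| <= `|x|) /\ (forall x, `|G x| <= `|x|) /\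
      F z = 1 /\ G z = 1 /\ `|w| <= 1 /\ eps m < F w - G w.
have hm m : exists t, P m t.
  apply: contrapT => hn; apply: nA; exists (eps m); split.
    have i0 : 0 < (m.+1%:R)^-1 :> R by rewrite invr_gt0 ltr0n.
    have i1 : (m.+1%:R)^-1 <= 1 :> R by rewrite invf_le1 ?ltr0n // ler1n.
    rewrite /eps; move: i0 i1; set a := (m.+1%:R)^-1 => i0 i1; clearbody a.
    by apply/andP; split; lra.
  move=> z _ z1 f g Jf Jg.
  have bf := inJT_bound Jf; have bg := inJT_bound Jg.
  case: Jf => lf [_ fz]; case: Jg => lg [_ gz]; rewrite z1 in fz gz.
  rewrite leNgt; apply/negP => /ereal_sup_gt [_ [y [_ y1] <-]]; rewrite lte_fin => lt.
  move: lt; rewrite ltr_normr => /orP [lt|lt].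
  - by apply: hn; exists (z, f, g, y).
  - by apply: hn; exists (z, g, f, y); rewrite /P opprB in lt *.
have [tup htup] := choice hm.
pose zs m := (tup m).1.1.1.
pose Fs m := (tup m).1.1.2.
pose Gs m := (tup m).1.2.
pose ws m := (tup m).2.
have hP m : P m (zs m, Fs m, Gs m, ws m).
  by move: (htup m); rewrite /zs /Fs /Gs /ws; case: (tup m) => [[[? ?] ?] ?].
have z1 m : `|zs m| = 1 by case: (hP m).
have lF m : linear_on [set: X] (Fs m) by case: (hP m) => _ [].
have lG m : linear_on [set: X] (Gs m) by case: (hP m) => _ [_ []].
have bF m : forall x, `|Fs m x| <= `|x| by case: (hP m) => _ [_ [_ []]].
have bG m : forall x, `|Gs m x| <= `|x| by case: (hP m) => _ [_ [_ [_ []]]].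
have Fz m : Fs m (zs m) = 1 by case: (hP m) => _ [_ [_ [_ [_ []]]]].
have Gz m : Gs m (zs m) = 1 by case: (hP m) => _ [_ [_ [_ [_ [_ []]]]]].
have w1 m : `|ws m| <= 1 by case: (hP m) => _ [_ [_ [_ [_ [_ [_ []]]]]]].
have ew m : eps m < Fs m (ws m) - Gs m (ws m).
  by case: (hP m) => _ [_ [_ [_ [_ [_ [_ []]]]]]].
clear htup hP hm.
have [cz hcz] := choice (fun m => sp (zs m)).
have [cw hcw] := choice (fun m => sp (ws m)).
have le_sum1 (a : 'I_n -> R) i : (forall j, 0 <= a j) -> a i <= \sum_(j < n) a j.
  by move=> a0; rewrite (bigD1_ord i) //= lerDl; exact: sumr_ge0.
pose Me := \sum_(i < n) `|e i|.
have Me0 : 0 <= Me by exact: sumr_ge0.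
pose M := K + Me.
have czb m i : `|cz m i| <= M.
  apply: le_trans (le_sum1 (fun j => `|cz m j|) i (fun j => normr_ge0 _)) _.
  apply: le_trans (hK (cz m)) _; rewrite -hcz z1 mulr1 /M; lra.
have cwb m i : `|cw m i| <= M.
  apply: le_trans (le_sum1 (fun j => `|cw m j|) i (fun j => normr_ge0 _)) _.
  apply: le_trans (hK (cw m)) _; rewrite -hcw.
  have := w1 m; have := normr_ge0 (ws m); rewrite /M => ? ?; nra.
have Feb m i : `|Fs m (e i)| <= M.
  apply: le_trans (bF m _) _; apply: le_trans (le_sum1 (fun j => `|e j|) i (fun j => normr_ge0 _)) _.
  rewrite /M -/Me; lra.
have Geb m i : `|Gs m (e i)| <= M.
  apply: le_trans (bG m _) _; apply: le_trans (le_sum1 (fun j => `|e j|) i (fun j => normr_ge0 _)) _.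
  rewrite /M -/Me; lra.
pose u (t : bool * bool * 'I_n) (m : nat) : R :=
  let: (b1, b2, i) := t in
  if b1 then (if b2 then cz m i else cw m i) else (if b2 then Fs m (e i) else Gs m (e i)).
have hb t m : `|u t m| <= M by case: t => [[[|] [|]] i] /=.
have [phi [hp cv]] := bw_fin (u := u) (M := M) hb.
pose lz i := limn (u (true, true, i) \o phi).
pose lw i := limn (u (true, false, i) \o phi).
pose lf i := limn (u (false, true, i) \o phi).
pose lg i := limn (u (false, false, i) \o phi).
have czc i : (fun m => cz (phi m) i) @ \oo --> lz i := cv (true, true, i).
have cwc i : (fun m => cw (phi m) i) @ \oo --> lw i := cv (true, false, i).
have cfc i : (fun m => Fs (phi m) (e i)) @ \oo --> lf i := cv (false, true, i).
have cgc i : (fun m => Gs (phi m) (e i)) @ \oo --> lg i := cv (false, false, i).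
pose z := \sum_(i < n) lz i *: e i.
pose w := \sum_(i < n) lw i *: e i.
have zc : (fun m => zs (phi m)) @ \oo --> z.
  have -> : (fun m => zs (phi m)) = (fun m => \sum_(i < n) cz (phi m) i *: e i).
    by apply: funext => m; exact: hcz.
  apply: cvg_sumV => i; apply: cvgZr_tmp; exact: czc.
have wc : (fun m => ws (phi m)) @ \oo --> w.
  have -> : (fun m => ws (phi m)) = (fun m => \sum_(i < n) cw (phi m) i *: e i).
    by apply: funext => m; exact: hcw.
  apply: cvg_sumV => i; apply: cvgZr_tmp; exact: cwc.
have zn : `|z| = 1.
  apply: (cvg_uniqR (cvg_norm zc)).
  have -> : (fun m => `|zs (phi m)|) = (fun _ => 1) by apply: funext => m; exact: z1.
  exact: cvg_cst.
have wn : `|w| <= 1.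
  apply: (cvgr_to_le (cvg_norm wc)); apply: nearW => m; exact: w1.
have [F [linF bndF cF]] := lim_functional (Fs := fun m => Fs (phi m)) sp (fun m => lF _) (fun m => bF _) cfc.
have [G [linG bndG cG]] := lim_functional (Fs := fun m => Gs (phi m)) sp (fun m => lG _) (fun m => bG _) cgc.
have FzG : F z = 1.
  apply: esym; apply: (cvg_uniqR _ (cvg_app (fun m => lF _) (fun m => bF _) (cF z) zc)).
  have -> : (fun m => Fs (phi m) (zs (phi m))) = (fun _ => 1) by apply: funext => m; exact: Fz.
  exact: cvg_cst.
have GzG : G z = 1.
  apply: esym; apply: (cvg_uniqR _ (cvg_app (fun m => lG _) (fun m => bG _) (cG z) zc)).
  have -> : (fun m => Gs (phi m) (zs (phi m))) = (fun _ => 1) by apply: funext => m; exact: Gz.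
  exact: cvg_cst.
have hw : (fun m => Fs (phi m) (ws (phi m)) - Gs (phi m) (ws (phi m))) @ \oo --> F w - G w.
  apply: cvgB.
  - exact: (cvg_app (fun m => lF _) (fun m => bF _) (cF w) wc).
  - exact: (cvg_app (fun m => lG _) (fun m => bG _) (cG w) wc).
have h2 : (fun m => 2 - harmonic m) @ \oo --> (2 : R).
  rewrite -[X in _ --> X]subr0; apply: cvgB; [exact: cvg_cst | exact: cvg_harmonic].
have FG2 : 2 <= F w - G w.
  apply: (ler_cvg_to h2 hw); apply: nearW => m.
  apply: le_trans (ltW (ew (phi m))).
  have hh : ((phi m).+1%:R)^-1 <= harmonic m :> R.
    by rewrite /= lef_pV2 ?posrE ?ltr0n // ler_nat ltnS incr_geq.
  exact: lerB (lexx 2) hh.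
have Fw0 : 0 < `|F w - G w|.
  apply: lt_le_trans (ler_norm _); apply: lt_le_trans FG2; exact: ltr0n.
have [td _] := key linF linG bndF bndG zn FzG GzG wn (lexx 0) Fw0.
have [eY [/andP [eY0 eY2] hsY]] := hY _ td.
have [_ ns] := key linF linG bndF bndG zn FzG GzG wn eY0
  (lt_le_trans eY2 (le_trans FG2 (ler_norm _))).
exact: ns hsY.
Qed.
Theorem theorem2p7 (R : realType) (X : normedModType R) :
  (forall eps : R, 0 <= eps < 2 ->
     (eps_smooth [set: X] eps <->
      forall Y : set X, two_dim_subspace Y -> eps_smooth Y eps)) /\
  (approx_smooth [set: X] ->
     forall Y : set X, two_dim_subspace Y -> approx_smooth Y) /\
  (finite_dimensional X ->
     (forall Y : set X, two_dim_subspace Y -> approx_smooth Y) ->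
     approx_smooth [set: X]).
Proof.
split.
  move=> eps /andP[e0 e2]; split; [exact: partB | exact: partA].
split.
  move=> [eps [he hs]] Y tdY; exists eps; split => //; exact: partB hs Y tdY.
exact: partC.
Qed.
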